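(* Let $P,P',P'',Q,S_1,S_2$ be programs and $B$ a Boolean expression such that $P'\equiv_B(P,B)$ and $P''\equiv_B(P,\neg B)$. If the operational triples $\{|P'|\}\ S_1\ \{|Q|\}$ and $\{|P''|\}\ S_2\ \{|Q|\}$ hold, then $\{|P|\}\ \mathbf{if}\ B\ \mathbf{then}\ S_1\ \mathbf{else}\ S_2\ \mathbf{fi}\ \{|Q|\}$ holds.
   Context: Programs are statements of a sequential imperative language with a standard small-step operational semantics over program states. $\mathrm{behs}(P)$ is the set of pairs (initial state, final state) of finite terminating executions of $P$; $(s,u)\in\mathrm{behs}(P;Q)$ iff there is $t$ with $(s,t)\in\mathrm{behs}(P)$ and $(t,u)\in\mathrm{behs}(Q)$. For a state $s$ and Boolean expression $B$, $s(B)\in\{\mathit{tt},\mathit{ff}\}$ is the (side-effect-free) value of $B$ in $s$. The statement $\mathbf{if}\ B\ \mathbf{then}\ S_1\ \mathbf{else}\ S_2\ \mathbf{fi}$ started in state $s$ executes $S_1$ from $s$ if $s(B)=\mathit{tt}$ and $S_2$ from $s$ otherwise. The post-state set is $\mathrm{pst}(P)=\{t:\exists s,\ (s,t)\in\mathrm{behs}(P)\}$. The operational triple $\{|P|\}\ S\ \{|Q|\}$ means $\mathrm{pst}(P;S)\subseteq\mathrm{pst}(Q)$. For programs $P',P$ and Boolean expression $B$, $P'\equiv_B(P,B)$ means $\mathrm{pst}(P')=\mathrm{pst}(P)\cap\{s : s(B)=\mathit{tt}\}$. *)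

(* Defs.v *)
From Stdlib Require Import ZArith Relations.
Open Scope Z_scope.

Definition var := nat.
Definition state := var -> Z.

Inductive aexp : Type :=
  | ANum (n : Z)
  | AVar (x : var)
  | APlus (a1 a2 : aexp)
  | AMinus (a1 a2 : aexp)
  | AMult (a1 a2 : aexp).

Inductive bexp : Type :=
  | BTrue
  | BFalse
  | BEq (a1 a2 : aexp)
  | BLe (a1 a2 : aexp)
  | BNot (b : bexp)
  | BAnd (b1 b2 : bexp).

Fixpoint aeval (s : state) (a : aexp) : Z :=
  match a with
  | ANum n => n
  | AVar x => s x
  | APlus a1 a2 => aeval s a1 + aeval s a2
  | AMinus a1 a2 => aeval s a1 - aeval s a2
  | AMult a1 a2 => aeval s a1 * aeval s a2
  end.

Fixpoint beval (s : state) (b : bexp) : bool :=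
  match b with
  | BTrue => true
  | BFalse => false
  | BEq a1 a2 => Z.eqb (aeval s a1) (aeval s a2)
  | BLe a1 a2 => Z.leb (aeval s a1) (aeval s a2)
  | BNot b => negb (beval s b)
  | BAnd b1 b2 => andb (beval s b1) (beval s b2)
  end.

Inductive stmt : Type :=
  | Skip
  | Assign (x : var) (a : aexp)
  | Seq (S1 S2 : stmt)
  | If (b : bexp) (S1 S2 : stmt)
  | While (b : bexp) (S : stmt).

Definition update (s : state) (x : var) (v : Z) : state :=
  fun y => if Nat.eqb y x then v else s y.

(* small-step semantics on configurations (statement, state);
   a configuration (Skip, t) is terminal *)
Inductive step : stmt * state -> stmt * state -> Prop :=
  | st_assign : forall x a s,
      step (Assign x a, s) (Skip, update s x (aeval s a))
  | st_seq_skip : forall S2 s,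
      step (Seq Skip S2, s) (S2, s)
  | st_seq : forall S1 S1' S2 s s',
      step (S1, s) (S1', s') -> step (Seq S1 S2, s) (Seq S1' S2, s')
  | st_if_true : forall b S1 S2 s,
      beval s b = true -> step (If b S1 S2, s) (S1, s)
  | st_if_false : forall b S1 S2 s,
      beval s b = false -> step (If b S1 S2, s) (S2, s)
  | st_while : forall b S s,
      step (While b S, s) (If b (Seq S (While b S)) Skip, s).

Definition steps := clos_refl_trans (stmt * state) step.

Definition behs (P : stmt) (s t : state) : Prop := steps (P, s) (Skip, t).

Definition pst (P : stmt) (t : state) : Prop := exists s, behs P s t.

Definition op_triple (P S Q : stmt) : Prop :=
  forall t, pst (Seq P S) t -> pst Q t.

Definition equivB (P' P : stmt) (B : bexp) : Prop :=
  forall t, pst P' t <-> (pst P t /\ beval t B = true).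

(* Main.v *)
Require Import Defs.
From Stdlib Require Import Relations.

Lemma seq_lift : forall c1 c2, clos_refl_trans_1n _ step c1 c2 ->
  forall P s t S, c1 = (P, s) -> c2 = (Skip, t) ->
  steps (Seq P S, s) (Seq Skip S, t).
Proof.
  intros c1 c2 H. induction H; intros P s t S E1 E2; subst.
  - inversion E2; subst. apply rt_refl.
  - destruct y as [P1 s1]. eapply rt_trans.
    + apply rt_step. apply st_seq. exact H.
    + eapply IHclos_refl_trans_1n; reflexivity.
Qed.

Lemma seq_decomp : forall c1 c2, clos_refl_trans_1n _ step c1 c2 ->
  forall P S s u, c1 = (Seq P S, s) -> c2 = (Skip, u) ->
  exists t, steps (P, s) (Skip, t) /\ steps (S, t) (Skip, u).
Proof.
  intros c1 c2 H. induction H; intros P S s u E1 E2; subst.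
  - discriminate.
  - inversion H; subst.
    + exists s. split. apply rt_refl. apply clos_rt1n_rt. exact H0.
    + destruct (IHclos_refl_trans_1n S1' S s' u eq_refl eq_refl) as [t [A B]].
      exists t. split; [|exact B].
      eapply rt_trans. apply rt_step. eassumption. exact A.
Qed.

Lemma if_decomp : forall B S1 S2 t u, steps (If B S1 S2, t) (Skip, u) ->
  (beval t B = true /\ steps (S1, t) (Skip, u)) \/
  (beval t B = false /\ steps (S2, t) (Skip, u)).
Proof.
  intros B S1 S2 t u H. apply clos_rt_rt1n in H. inversion H; subst.
  inversion H0; subst.
  - left. split; auto. apply clos_rt1n_rt. exact H1.
  - right. split; auto. apply clos_rt1n_rt. exact H1.
Qed.

Theorem theorem3 (P P' P'' Q S1 S2 : stmt) (B : bexp) :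
  equivB P' P B ->
  equivB P'' P (BNot B) ->
  op_triple P' S1 Q ->
  op_triple P'' S2 Q ->
  op_triple P (If B S1 S2) Q.
Proof.
  intros E1 E2 T1 T2 u [s H].
  unfold behs in H. apply clos_rt_rt1n in H.
  destruct (seq_decomp _ _ H P (If B S1 S2) s u eq_refl eq_refl) as [t [HP HI]].
  destruct (if_decomp _ _ _ _ _ HI) as [[Hb H1]|[Hb H2]].
  - assert (pst P' t) as [s' Hs'] by (apply E1; split; [exists s; exact HP| exact Hb]).
    apply T1. exists s'. unfold behs.
    eapply rt_trans. eapply seq_lift. apply clos_rt_rt1n. exact Hs'. reflexivity. reflexivity.
    eapply rt_trans. apply rt_step. apply st_seq_skip. exact H1.
  - assert (pst P'' t) as [s' Hs'] by (apply E2; split; [exists s; exact HP| simpl; rewrite Hb; reflexivity]).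
    apply T2. exists s'. unfold behs.
    eapply rt_trans. eapply seq_lift. apply clos_rt_rt1n. exact Hs'. reflexivity. reflexivity.
    eapply rt_trans. apply rt_step. apply st_seq_skip. exact H2.
Qed.
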